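(* Let $S$ be an abundant semigroup with a quasi-ideal adequate transversal $S^0$. Then $S$ is quasi-adequate if and only if $\overline{xy}=\overline{x}\,\overline{y}$ for all $x,y\in S$.
   Context: For a semigroup $S$, $S^1$ is $S$ with an identity adjoined, $\mathcal{L},\mathcal{R}$ Green's relations. $\mathcal{R}^\ast=\{(a,b):\forall x,y\in S^1,\ xa=ya\iff xb=yb\}$, $\mathcal{L}^\ast=\{(a,b):\forall x,y\in S^1,\ ax=ay\iff bx=by\}$. $S$ is abundant if each $\mathcal{R}^\ast$- and $\mathcal{L}^\ast$-class contains an idempotent; adequate if also idempotents commute (then $a^+$, $a^\ast$ are the unique idempotents $\mathcal{R}^\ast$-, resp. $\mathcal{L}^\ast$-related to $a$). Quasi-adequate: abundant with idempotents forming a subsemigroup. An abundant subsemigroup $U$ of abundant $S$ is a $\ast$-subsemigroup if $\mathcal{L}^\ast(U)=\mathcal{L}^\ast(S)\cap(U\times U)$, $\mathcal{R}^\ast(U)=\mathcal{R}^\ast(S)\cap(U\times U)$. An adequate $\ast$-subsemigroup $S^0$ of abundant $S$ is an adequate transversal if each $x\in S$ has a unique $\overline{x}\in S^0$ and idempotents $e,f$ of $S$ with $x=e\overline{x}f$, $e\,\mathcal{L}\,\overline{x}^+$, $f\,\mathcal{R}\,\overline{x}^\ast$. It is a quasi-ideal if $S^0SS^0\subseteq S^0$. *)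

(* Defs.v *)
Set Implicit Arguments.
Unset Strict Implicit.

Section Semigroup.
Variable T : Type.
Variable mul : T -> T -> T.

(* S^1 modelled as option T, None being the adjoined identity. *)
Definition lmul1 (x : option T) (a : T) : T :=
  match x with None => a | Some x => mul x a end.
Definition rmul1 (a : T) (x : option T) : T :=
  match x with None => a | Some x => mul a x end.

Definition in1 (U : T -> Prop) (x : option T) : Prop :=
  match x with None => True | Some x => U x end.

Definition idem (e : T) : Prop := mul e e = e.

Definition GreenL (a b : T) : Prop :=
  (exists u : option T, a = lmul1 u b) /\ (exists v : option T, b = lmul1 v a).

Definition GreenR (a b : T) : Prop :=
  (exists u : option T, a = rmul1 b u) /\ (exists v : option T, b = rmul1 a v).

Definition Rstar_in (U : T -> Prop) (a b : T) : Prop :=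
  forall x y : option T, in1 U x -> in1 U y ->
    (lmul1 x a = lmul1 y a <-> lmul1 x b = lmul1 y b).
Definition Lstar_in (U : T -> Prop) (a b : T) : Prop :=
  forall x y : option T, in1 U x -> in1 U y ->
    (rmul1 a x = rmul1 a y <-> rmul1 b x = rmul1 b y).

Definition allS : T -> Prop := fun _ => True.
Definition Rstar := Rstar_in allS.
Definition Lstar := Lstar_in allS.

Definition subsemigroup (U : T -> Prop) : Prop :=
  forall a b, U a -> U b -> U (mul a b).

Definition abundant_in (U : T -> Prop) : Prop :=
  forall a, U a ->
    (exists e, U e /\ idem e /\ Rstar_in U a e) /\
    (exists f, U f /\ idem f /\ Lstar_in U a f).

Definition abundant : Prop := abundant_in allS.

Definition quasi_adequate : Prop :=
  abundant /\ (forall e f, idem e -> idem f -> idem (mul e f)).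

Definition adequate_in (U : T -> Prop) : Prop :=
  abundant_in U /\
  (forall e f, U e -> U f -> idem e -> idem f -> mul e f = mul f e).

Definition star_subsemigroup (U : T -> Prop) : Prop :=
  subsemigroup U /\ abundant_in U /\
  (forall a b, U a -> U b -> (Lstar_in U a b <-> Lstar a b)) /\
  (forall a b, U a -> U b -> (Rstar_in U a b <-> Rstar a b)).

(* b is a possible value of \bar x : b in S0 and x = e b f with e, f
   idempotents of S, e L b^+, f R b^*, where b^+ (resp. b^star) is the
   idempotent of S0 that is R*- (resp. L*-) related to b. *)
Definition is_bar (S0 : T -> Prop) (x b : T) : Prop :=
  S0 b /\ exists e f, idem e /\ idem f /\ x = mul (mul e b) f /\
    (exists p, S0 p /\ idem p /\ Rstar b p /\ GreenL e p) /\
    (exists q, S0 q /\ idem q /\ Lstar b q /\ GreenR f q).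

Definition adequate_transversal (S0 : T -> Prop) : Prop :=
  adequate_in S0 /\ star_subsemigroup S0 /\
  forall x, (exists b, is_bar S0 x b) /\
            (forall b b', is_bar S0 x b -> is_bar S0 x b' -> b = b').

Definition quasi_ideal (S0 : T -> Prop) : Prop :=
  forall a s b, S0 a -> S0 b -> S0 (mul (mul a s) b).

End Semigroup.

(* Main.v *)
Require Import Defs.

Section P.
Variable T : Type.
Variable mul : T -> T -> T.
Hypothesis assoc : forall a b c, mul a (mul b c) = mul (mul a b) c.
Variable S0 : T -> Prop.
Hypothesis Htrans : adequate_transversal mul S0.
Hypothesis Hqi : quasi_ideal mul S0.
Local Notation "a ** b" := (mul a b) (at level 40, left associativity).

Lemma cl (a b c : T) : a ** b = c -> forall X, X ** a ** b = X ** c.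
Proof. intros H X; rewrite <- assoc, H; reflexivity. Qed.

Lemma Rstar_fix p b : idem mul p -> Rstar mul b p -> p ** b = b.
Proof. intros Hp H. apply (H (Some p) None I I). simpl. exact Hp. Qed.
Lemma Lstar_fix q b : idem mul q -> Lstar mul b q -> b ** q = b.
Proof. intros Hq H. apply (H (Some q) None I I). simpl. exact Hq. Qed.
Lemma Rstar_refl a : Rstar mul a a.
Proof. intros x y _ _; tauto. Qed.
Lemma Lstar_refl a : Lstar mul a a.
Proof. intros x y _ _; tauto. Qed.

Lemma GL e p : idem mul e -> idem mul p -> GreenL mul e p -> e ** p = e /\ p ** e = p.
Proof.
  unfold idem; intros He Hp [[u Hu] [v Hv]]; split.
  - destruct u as [u|]; simpl in Hu; subst e; [rewrite <- assoc, Hp|]; auto.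
  - destruct v as [v|]; simpl in Hv; subst p; [rewrite <- assoc, He|]; auto.
Qed.
Lemma GR f q : idem mul f -> idem mul q -> GreenR mul f q -> q ** f = f /\ f ** q = q.
Proof.
  unfold idem; intros He Hp [[u Hu] [v Hv]]; split.
  - destruct u as [u|]; simpl in Hu; subst f; [rewrite assoc, Hp|]; auto.
  - destruct v as [v|]; simpl in Hv; subst q; [rewrite assoc, He|]; auto.
Qed.

Lemma comm0 e f : S0 e -> S0 f -> idem mul e -> idem mul f -> e ** f = f ** e.
Proof. destruct Htrans as [[_ H] _]; auto. Qed.
Lemma sub0 a b : S0 a -> S0 b -> S0 (a ** b).
Proof. destruct Htrans as [_ [[H _] _]]; auto. Qed.
Lemma uniq x b b' : is_bar mul S0 x b -> is_bar mul S0 x b' -> b = b'.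
Proof. destruct Htrans as [_ [_ H]]; apply (proj2 (H x)). Qed.
Lemma plus_ex a : S0 a -> exists p, S0 p /\ idem mul p /\ Rstar mul a p.
Proof.
  destruct Htrans as [_ [[_ [Hab [_ HR]]] _]]. intros Ha.
  destruct (proj1 (Hab a Ha)) as [p [Sp [Ip Rp]]]. exists p; split; [|split]; auto.
  apply HR; auto.
Qed.
Lemma star_ex a : S0 a -> exists p, S0 p /\ idem mul p /\ Lstar mul a p.
Proof.
  destruct Htrans as [_ [[_ [Hab [HL _]]] _]]. intros Ha.
  destruct (proj2 (Hab a Ha)) as [p [Sp [Ip Rp]]]. exists p; split; [|split]; auto.
  apply HL; auto.
Qed.
Lemma idem_mul0 e f : S0 e -> S0 f -> idem mul e -> idem mul f -> idem mul (e ** f).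
Proof.
  unfold idem; intros Se Sf Ie If.
  rewrite <- assoc. rewrite (assoc f e f). rewrite <- (comm0 e f); auto.
  rewrite <- assoc, If, assoc, Ie; reflexivity.
Qed.

Lemma bar_self a : S0 a -> is_bar mul S0 a a.
Proof.
  intros Sa. destruct (plus_ex a Sa) as [p [Sp [Ip Rp]]].
  destruct (star_ex a Sa) as [q [Sq [Iq Lq]]].
  split; auto. exists p, q. split; [auto|split; [auto|split]].
  - rewrite (Rstar_fix p a), (Lstar_fix q a); auto.
  - split.
    + exists p; split; [auto|split; [auto|split; [auto|]]]. split; exists None; reflexivity.
    + exists q; split; [auto|split; [auto|split; [auto|]]]. split; exists None; reflexivity.
Qed.

Lemma bar_sand e e0 f f0 v :
  S0 e0 -> S0 f0 -> S0 v -> idem mul e0 -> idem mul f0 -> idem mul v ->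
  idem mul e -> idem mul f ->
  e ** e0 = e -> e0 ** e = e0 -> f0 ** f = f -> f ** f0 = f0 ->
  is_bar mul S0 (e ** v ** f) (e0 ** v ** f0).
Proof.
  intros Se0 Sf0 Sv Ie0 If0 Iv Ie If H1 H2 H3 H4.
  set (c := e0 ** v ** f0).
  assert (Sc : S0 c) by (apply sub0; [apply sub0|]; auto).
  assert (Ic : idem mul c) by (apply idem_mul0; [apply sub0|auto|apply idem_mul0|]; auto).
  assert (Eq1 : c = f0 ** v ** e0).
  { unfold c. rewrite (comm0 e0 v); auto. rewrite <- (assoc v e0 f0), (comm0 e0 f0); auto.
    rewrite assoc, (comm0 v f0); auto. }
  assert (Ce : c ** e = c).
  { rewrite Eq1. rewrite <- assoc, H2; reflexivity. }
  assert (Cf : f ** c = c).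
  { rewrite Eq1, !assoc, H4; reflexivity. }
  split; auto. exists (e ** c), (c ** f).
  split; [|split; [|split; [|split]]].
  - unfold idem. rewrite assoc, (cl _ _ _ Ce). rewrite <- assoc, Ic. reflexivity.
  - unfold idem. rewrite <- assoc, (assoc f c f), Cf, assoc, Ic. reflexivity.
  - transitivity (e ** c ** f).
    + unfold c. rewrite !assoc, H1. rewrite <- (assoc _ f0 f), H3. reflexivity.
    + rewrite assoc, <- (assoc e c c), Ic, <- (assoc e c c), Ic. reflexivity.
  - exists c; split; [auto|split; [auto|split; [apply Rstar_refl|]]].
    split. exists (Some e); reflexivity. exists (Some c); simpl. rewrite assoc, Ce, Ic; reflexivity.
  - exists c; split; [auto|split; [auto|split; [apply Lstar_refl|]]].
    split. exists (Some f); reflexivity. exists (Some c); simpl. rewrite <- assoc, Cf, Ic; reflexivity.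
Qed.


Lemma fe_eq e e0 f f0 :
  (forall a b, idem mul a -> idem mul b -> idem mul (a ** b)) ->
  S0 e0 -> S0 f0 -> idem mul e0 -> idem mul f0 ->
  idem mul e -> idem mul f ->
  e ** e0 = e -> e0 ** e = e0 -> f0 ** f = f -> f ** f0 = f0 ->
  f ** e = e0 ** f0.
Proof.
  intros Hb Se0 Sf0 Ie0 If0 Ie If H1 H2 H3 H4.
  set (u := e0 ** f0).
  assert (Su : S0 u) by (apply sub0; auto).
  assert (Iu : idem mul u) by (apply idem_mul0; auto).
  assert (B1 := bar_sand e e0 f f0 u Se0 Sf0 Su Ie0 If0 Iu Ie If H1 H2 H3 H4).
  assert (E1 : e ** u ** f = e ** f).
  { unfold u. rewrite assoc, H1, <- assoc, H3. reflexivity. }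
  assert (E2 : e0 ** u ** f0 = u).
  { unfold u. rewrite assoc. unfold idem in Ie0, If0. rewrite Ie0, <- assoc, If0. reflexivity. }
  rewrite E1, E2 in B1.
  set (w := f ** e).
  assert (Sw : S0 w).
  { unfold w. assert (Hq := Hqi f0 (f ** e) e0 Sf0 Se0).
    rewrite assoc, H3, <- assoc, H1 in Hq. exact Hq. }
  assert (Iw : idem mul w) by (apply Hb; auto).
  assert (B2 := bar_sand e e0 f f0 w Se0 Sf0 Sw Ie0 If0 Iw Ie If H1 H2 H3 H4).
  assert (E3 : e ** w ** f = e ** f).
  { unfold w. rewrite assoc, <- (assoc (e ** f) e f). apply Hb; auto. }
  rewrite E3 in B2.
  assert (E4 : e0 ** w ** f0 = w).
  { assert (W1 : f0 ** w = w) by (unfold w; rewrite assoc, H3; reflexivity).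
    assert (W2 : w ** e0 = w) by (unfold w; rewrite <- assoc, H1; reflexivity).
    rewrite (comm0 e0 w), W2, (comm0 w f0), W1; auto. }
  rewrite E4 in B2.
  symmetry; exact (uniq _ _ _ B1 B2).
Qed.


Lemma fwd x y xb yb :
  (forall a b, idem mul a -> idem mul b -> idem mul (a ** b)) ->
  is_bar mul S0 x xb -> is_bar mul S0 y yb -> is_bar mul S0 (x ** y) (xb ** yb).
Proof.
  intros Hb [Sxb [e1 [f1 [Ie1 [If1 [Ex [[p1 [Sp1 [Ip1 [Rp1 Gp1]]]] [q1 [Sq1 [Iq1 [Lq1 Gq1]]]]]]]]]]]
    [Syb [e2 [f2 [Ie2 [If2 [Ey [[p2 [Sp2 [Ip2 [Rp2 Gp2]]]] [q2 [Sq2 [Iq2 [Lq2 Gq2]]]]]]]]]]].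
  destruct (GL e1 p1 Ie1 Ip1 Gp1) as [e1p1 p1e1].
  destruct (GL e2 p2 Ie2 Ip2 Gp2) as [e2p2 p2e2].
  destruct (GR f1 q1 If1 Iq1 Gq1) as [q1f1 f1q1].
  destruct (GR f2 q2 If2 Iq2 Gq2) as [q2f2 f2q2].
  assert (Fx1 := Rstar_fix p1 xb Ip1 Rp1).
  assert (Fx2 := Lstar_fix q1 xb Iq1 Lq1).
  assert (Fy1 := Rstar_fix p2 yb Ip2 Rp2).
  assert (Fy2 := Lstar_fix q2 yb Iq2 Lq2).
  assert (K : f1 ** e2 = p2 ** q1) by (apply fe_eq; auto).
  assert (Mid : xb ** f1 ** e2 ** yb = xb ** yb).
  { rewrite (cl _ _ _ K). rewrite (comm0 p2 q1), assoc, Fx2; auto.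
    rewrite <- assoc, Fy1. reflexivity. }
  assert (Exy : x ** y = e1 ** (xb ** yb) ** f2).
  { rewrite Ex, Ey, !assoc.
    replace (e1 ** xb ** f1 ** e2 ** yb) with (e1 ** (xb ** f1 ** e2 ** yb)) by (rewrite !assoc; reflexivity).
    rewrite Mid, !assoc. reflexivity. }
  rewrite Exy. set (b := xb ** yb).
  assert (Sb : S0 b) by (apply sub0; auto).
  destruct (plus_ex b Sb) as [r [Sr [Ir Rr]]].
  destruct (star_ex b Sb) as [s [Ss [Is Ls]]].
  assert (rb := Rstar_fix r b Ir Rr).
  assert (bs := Lstar_fix s b Is Ls).
  assert (p1r : p1 ** r = r).
  { apply (Rr (Some p1) None I I). simpl. unfold b. rewrite assoc, Fx1. reflexivity. }
  assert (sq2 : s ** q2 = s).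
  { apply (Ls (Some q2) None I I). simpl. unfold b. rewrite <- assoc, Fy2. reflexivity. }
  assert (rp1 : r ** p1 = r) by (rewrite (comm0 r p1); auto).
  assert (q2s : q2 ** s = s) by (rewrite (comm0 q2 s); auto).
  assert (RER : r ** e1 ** r = r).
  { transitivity (r ** p1 ** e1 ** r); [rewrite rp1; reflexivity|].
    rewrite <- (assoc r p1 e1), p1e1, rp1. exact Ir. }
  assert (F2S : f2 ** s = s).
  { transitivity (f2 ** (q2 ** s)); [rewrite q2s; reflexivity|].
    rewrite assoc, f2q2, q2s. reflexivity. }
  split; auto. exists (e1 ** r), (s ** f2).
  split; [|split; [|split; [|split]]].
  - unfold idem. rewrite assoc, <- (assoc e1 r e1), <- (assoc e1 (r ** e1) r), RER. reflexivity.
  - unfold idem. rewrite assoc, <- (assoc s f2 s), F2S. unfold idem in Is. rewrite Is. reflexivity.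
  - rewrite <- (assoc e1 r b), rb, assoc, <- (assoc e1 b s), bs. reflexivity.
  - exists r; split; [auto|split; [auto|split; [auto|]]].
    split. exists (Some e1); reflexivity. exists (Some r); simpl. rewrite assoc, RER; reflexivity.
  - exists s; split; [auto|split; [auto|split; [auto|]]].
    split. exists (Some f2); reflexivity. exists (Some s); simpl. rewrite <- assoc, F2S. unfold idem in Is. rewrite Is; reflexivity.
Qed.


Lemma bar_ex x : exists b, is_bar mul S0 x b.
Proof. destruct Htrans as [_ [_ H]]; apply (proj1 (H x)). Qed.

Lemma bar_R h q : S0 q -> idem mul q -> idem mul h -> q ** h = h -> h ** q = q -> is_bar mul S0 h q.
Proof.
  intros Sq Iq Ih H1 H2. split; auto. exists q, h.
  split; [auto|split; [auto|split]].
  - unfold idem in Iq. rewrite Iq, H1. reflexivity.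
  - split.
    + exists q; split; [auto|split; [auto|split; [apply Rstar_refl|]]].
      split; exists None; reflexivity.
    + exists q; split; [auto|split; [auto|split; [apply Lstar_refl|]]].
      split. exists (Some h); simpl; auto. exists (Some q); simpl; auto.
Qed.

Lemma bar_L g p : S0 p -> idem mul p -> idem mul g -> g ** p = g -> p ** g = p -> is_bar mul S0 g p.
Proof.
  intros Sp Ip Ig H1 H2. split; auto. exists g, p.
  split; [auto|split; [auto|split]].
  - rewrite H1, H1. reflexivity.
  - split.
    + exists p; split; [auto|split; [auto|split; [apply Rstar_refl|]]].
      split. exists (Some g); simpl; auto. exists (Some p); simpl; auto.
    + exists p; split; [auto|split; [auto|split; [apply Lstar_refl|]]].
      split; exists None; reflexivity.
Qed.

Lemma bwd :
  (forall x y xb yb, is_bar mul S0 x xb -> is_bar mul S0 y yb ->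
     is_bar mul S0 (x ** y) (xb ** yb)) ->
  forall e f, idem mul e -> idem mul f -> idem mul (e ** f).
Proof.
  intros H e f Ie If.
  destruct (bar_ex e) as [a Ha]. destruct (bar_ex f) as [b Hb].
  assert (Ia : a ** a = a).
  { symmetry. apply (uniq e); auto. assert (Hee := H e e a a Ha Ha).
    unfold idem in Ie. rewrite Ie in Hee. exact Hee. }
  assert (Ib : b ** b = b).
  { symmetry. apply (uniq f); auto. assert (Hee := H f f b b Hb Hb).
    unfold idem in If. rewrite If in Hee. exact Hee. }
  destruct Ha as [Sa [g1 [h1 [Ig1 [Ih1 [Ee [[p1 [Sp1 [Ip1 [Rp1 Gp1]]]] [q1 [Sq1 [Iq1 [Lq1 Gq1]]]]]]]]]]].
  destruct Hb as [Sb [g2 [h2 [Ig2 [Ih2 [Ef [[p2 [Sp2 [Ip2 [Rp2 Gp2]]]] [q2 [Sq2 [Iq2 [Lq2 Gq2]]]]]]]]]]].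
  destruct (GL g1 p1 Ig1 Ip1 Gp1) as [g1p1 p1g1].
  destruct (GL g2 p2 Ig2 Ip2 Gp2) as [g2p2 p2g2].
  destruct (GR h1 q1 Ih1 Iq1 Gq1) as [q1h1 h1q1].
  destruct (GR h2 q2 Ih2 Iq2 Gq2) as [q2h2 h2q2].
  assert (Fa1 := Rstar_fix p1 a Ip1 Rp1).
  assert (Fa2 := Lstar_fix q1 a Iq1 Lq1).
  assert (Fb1 := Rstar_fix p2 b Ip2 Rp2).
  assert (Fb2 := Lstar_fix q2 b Iq2 Lq2).
  assert (Bh1 := bar_R h1 q1 Sq1 Iq1 Ih1 q1h1 h1q1).
  assert (Bh2 := bar_R h2 q2 Sq2 Iq2 Ih2 q2h2 h2q2).
  assert (Bg1 := bar_L g1 p1 Sp1 Ip1 Ig1 g1p1 p1g1).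
  assert (Bg2 := bar_L g2 p2 Sp2 Ip2 Ig2 g2p2 p2g2).
  assert (C1 : a ** h1 ** g2 ** b = a ** b).
  { assert (SZ : S0 (a ** h1 ** g2 ** b)).
    { assert (Hq := Hqi a (h1 ** g2) b Sa Sb). rewrite assoc in Hq. exact Hq. }
    assert (B := H _ _ _ _ (H _ _ _ _ (H _ _ _ _ (bar_self a Sa) Bh1) Bg2) (bar_self b Sb)).
    rewrite Fa2, <- (assoc a p2 b), Fb1 in B.
    exact (uniq _ _ _ (bar_self _ SZ) B). }
  assert (C2 : b ** h2 ** g1 ** a = b ** a).
  { assert (SZ : S0 (b ** h2 ** g1 ** a)).
    { assert (Hq := Hqi b (h2 ** g1) a Sb Sa). rewrite assoc in Hq. exact Hq. }
    assert (B := H _ _ _ _ (H _ _ _ _ (H _ _ _ _ (bar_self b Sb) Bh2) Bg1) (bar_self a Sa)).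
    rewrite Fb2, <- (assoc b p1 a), Fa1 in B.
    exact (uniq _ _ _ (bar_self _ SZ) B). }
  assert (E : e ** f = g1 ** a ** b ** h2).
  { rewrite Ee, Ef, !assoc.
    replace (g1 ** a ** h1 ** g2 ** b) with (g1 ** (a ** h1 ** g2 ** b)) by (rewrite !assoc; reflexivity).
    rewrite C1, !assoc. reflexivity. }
  unfold idem. rewrite E, !assoc.
  replace (g1 ** a ** b ** h2 ** g1 ** a) with (g1 ** a ** (b ** h2 ** g1 ** a)) by (rewrite !assoc; reflexivity).
  rewrite C2, (comm0 b a); auto.
  rewrite !assoc, (cl _ _ _ Ia), (cl _ _ _ Ib). reflexivity.
Qed.

End P.

Theorem proposition2p7 (T : Type) (mul : T -> T -> T)
  (assoc : forall a b c, mul a (mul b c) = mul (mul a b) c)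
  (S0 : T -> Prop)
  (Habund : abundant mul)
  (Htrans : adequate_transversal mul S0)
  (Hqi : quasi_ideal mul S0) :
  quasi_adequate mul <->
  (forall x y xb yb, is_bar mul S0 x xb -> is_bar mul S0 y yb ->
     is_bar mul S0 (mul x y) (mul xb yb)).
Proof.
  split.
  - intros [_ Hb] x y xb yb Hx Hy. exact (fwd T mul assoc S0 Htrans Hqi x y xb yb Hb Hx Hy).
  - intros H. split; [exact Habund|]. exact (bwd T mul assoc S0 Htrans Hqi H).
Qed.
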